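(* In the algebra $\mathcal O_q$ defined in the context, with $B_\delta=q^{-2}\mathcal W_1\mathcal W_0-\mathcal W_0\mathcal W_1$, the following hold for all integers $n\ge1$: $$\mathcal W_{-n}=\mathcal W_n-\frac{(q-q^{-1})\mathcal W_0\tilde{\mathcal G}_n}{(q^2-q^{-2})^2}+\frac{q^2[B_\delta,\mathcal W_{1-n}]}{(q^2-q^{-2})^2},\qquad \mathcal W_{n+1}=\mathcal W_{1-n}-\frac{(q-q^{-1})\mathcal W_1\tilde{\mathcal G}_n}{(q^2-q^{-2})^2}-\frac{[B_\delta,\mathcal W_n]}{(q^2-q^{-2})^2}.$$
   Context: All algebras are associative and unital over a field $\mathbb F$; $q\in\mathbb F$ is nonzero and not a root of unity. For elements $X,Y$ of an algebra, $[X,Y]=XY-YX$ and $[X,Y]_q=qXY-q^{-1}YX$. Let $\rho=-(q^2-q^{-2})^2$. The algebra $\mathcal O_q$ is defined by generators $\mathcal W_{-k},\mathcal W_{k+1},\mathcal G_{k+1},\tilde{\mathcal G}_{k+1}$ ($k\in\mathbb N$) and the following relations for all $k,\ell\in\mathbb N$: $[\mathcal W_0,\mathcal W_{k+1}]=[\mathcal W_{-k},\mathcal W_1]=(\tilde{\mathcal G}_{k+1}-\mathcal G_{k+1})/(q+q^{-1})$; $[\mathcal W_0,\mathcal G_{k+1}]_q=[\tilde{\mathcal G}_{k+1},\mathcal W_0]_q=\rho\mathcal W_{-k-1}-\rho\mathcal W_{k+1}$; $[\mathcal G_{k+1},\mathcal W_1]_q=[\mathcal W_1,\tilde{\mathcal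 G}_{k+1}]_q=\rho\mathcal W_{k+2}-\rho\mathcal W_{-k}$; $[\mathcal W_{-k},\mathcal W_{-\ell}]=0$, $[\mathcal W_{k+1},\mathcal W_{\ell+1}]=0$; $[\mathcal W_{-k},\mathcal W_{\ell+1}]+[\mathcal W_{k+1},\mathcal W_{-\ell}]=0$; $[\mathcal W_{-k},\mathcal G_{\ell+1}]+[\mathcal G_{k+1},\mathcal W_{-\ell}]=0$; $[\mathcal W_{-k},\tilde{\mathcal G}_{\ell+1}]+[\tilde{\mathcal G}_{k+1},\mathcal W_{-\ell}]=0$; $[\mathcal W_{k+1},\mathcal G_{\ell+1}]+[\mathcal G_{k+1},\mathcal W_{\ell+1}]=0$; $[\mathcal W_{k+1},\tilde{\mathcal G}_{\ell+1}]+[\tilde{\mathcal G}_{k+1},\mathcal W_{\ell+1}]=0$; $[\mathcal G_{k+1},\mathcal G_{\ell+1}]=0$, $[\tilde{\mathcal G}_{k+1},\tilde{\mathcal G}_{\ell+1}]=0$; $[\tilde{\mathcal G}_{k+1},\mathcal G_{\ell+1}]+[\mathcal G_{k+1},\tilde{\mathcal G}_{\ell+1}]=0$. *)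

(* Defs.v *)
From HB Require Import structures.
From mathcomp Require Import all_boot all_order all_algebra.
Set Implicit Arguments. Unset Strict Implicit. Unset Printing Implicit Defensive.
Import GRing.Theory.
Local Open Scope ring_scope.

Definition comm (R : ringType) (x y : R) : R := x * y - y * x.

Definition qcomm (F : fieldType) (A : algType F) (q : F) (x y : A) : A :=
  q *: (x * y) - q^-1 *: (y * x).

Definition rho (F : fieldType) (q : F) : F := - (q ^+ 2 - q ^- 2) ^+ 2.

(* Indexing convention for the generators of O_q:
     Wm k  = W_{-k}       (k in N; so Wm 0 = W_0)
     Wp k  = W_{k+1}      (so Wp 0 = W_1)
     G k   = G_{k+1}
     Gt k  = tilde G_{k+1}
   Oq_rels states that these elements of the F-algebra A satisfy all the
   defining relations of O_q. *)
Definition Oq_rels (F : fieldType) (A : algType F) (q : F)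
    (Wm Wp G Gt : nat -> A) : Prop :=
  [/\ forall k : nat,
        comm (Wm 0%N) (Wp k) = (q + q^-1)^-1 *: (Gt k - G k) /\
        comm (Wm k) (Wp 0%N) = (q + q^-1)^-1 *: (Gt k - G k),
      forall k : nat,
        qcomm q (Wm 0%N) (G k) = rho q *: Wm k.+1 - rho q *: Wp k /\
        qcomm q (Gt k) (Wm 0%N) = rho q *: Wm k.+1 - rho q *: Wp k,
      forall k : nat,
        qcomm q (G k) (Wp 0%N) = rho q *: Wp k.+1 - rho q *: Wm k /\
        qcomm q (Wp 0%N) (Gt k) = rho q *: Wp k.+1 - rho q *: Wm k,
      forall k l : nat,
        [/\ comm (Wm k) (Wm l) = 0, comm (Wp k) (Wp l) = 0,
            comm (Wm k) (Wp l) + comm (Wp k) (Wm l) = 0,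
            comm (Wm k) (G l) + comm (G k) (Wm l) = 0 &
            comm (Wm k) (Gt l) + comm (Gt k) (Wm l) = 0] &
      forall k l : nat,
        [/\ comm (Wp k) (G l) + comm (G k) (Wp l) = 0,
            comm (Wp k) (Gt l) + comm (Gt k) (Wp l) = 0,
            comm (G k) (G l) = 0, comm (Gt k) (Gt l) = 0 &
            comm (Gt k) (G l) + comm (G k) (Gt l) = 0]].

Definition Bdelta (F : fieldType) (A : algType F) (q : F) (Wm Wp : nat -> A) : A :=
  q ^- 2 *: (Wp 0%N * Wm 0%N) - Wm 0%N * Wp 0%N.

(* Main.v *)
Require Import Defs.
From HB Require Import structures.
From mathcomp Require Import all_boot all_order all_algebra.
From mathcomp Require Import ring.
Import GRing.Theory.
Local Open Scope ring_scope.

Lemma zswap (V : zmodType) (x y z w : V) : (x - y) + (z - w) = (z - y) + (x - w).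
Proof. by rewrite addrACA [RHS]addrACA (addrC x z). Qed.

Lemma commB_X (F : fieldType) (A: algType F) (k: F) (W1 W0 X : A) : W0*X = X*W0 ->
  comm (k*:(W1*W0) - W0*W1) X = W0 * comm X W1 - k *: (comm X W1 * W0).
Proof.
move=> h; rewrite /comm !mulrBl !mulrBr -!scalerAl -!scalerAr !mulrA.
rewrite scalerBr !opprB -(mulrA W1 W0 X) h mulrA.
by rewrite zswap.
Qed.

Lemma commB_Y (F : fieldType) (A: algType F) (k: F) (W1 W0 Y : A) : W1*Y = Y*W1 ->
  comm (k*:(W1*W0) - W0*W1) Y = k *: (W1 * comm W0 Y) - comm W0 Y * W1.
Proof.
move=> h; rewrite /comm !mulrBl !mulrBr -!scalerAl -!scalerAr !mulrA.
rewrite -(mulrA W0 W1 Y) h mulrA -h scalerBr !opprB addrACA [RHS]addrACA.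
by rewrite (addrC (- _)).
Qed.
Lemma zl1 (V : zmodType) (x y a b c : V) :
  (x - y) - (a + b - (y - c)) = (x - a) - (b + c).
Proof.
rewrite !opprD !opprK !addrA.
by rewrite [_ - b + y]addrAC [_ - a + y]addrAC subrK.
Qed.

Lemma key1 (F : fieldType) (V : lmodType F) (q r : F) (hq0 : q != 0) (u v a b E : V)
 (hP : q*:v - q^-1*:b = r*:E) (hQ : q*:a - q^-1*:u = r*:E) :
 (u - v) - q^-2 *: (a - b) = (1 - q^-4) *: u - ((q^-3 + q^-1) * r) *: E.
Proof.
have hb : b = (q*q)*:v - (q*r)*:E.
  have := congr1 (fun t => q *: t) hP; rewrite /= scalerBr !scalerA mulfV // scale1r => h.
  by rewrite -h subKr.
have ha : a = (q^-1*q^-1)*:u + (q^-1*r)*:E.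
  have := congr1 (fun t => q^-1 *: t) hQ; rewrite /= scalerBr !scalerA mulVf // scale1r => h.
  by rewrite -h addrC subrK.
rewrite ha hb !scalerDr !scalerN !scalerBr !scalerA.
have -> : q^-2 * (q * q) = 1 by field.
rewrite scale1r zl1 scalerBl scale1r mulrDl scalerDl.
congr (_ - _ *: _ - (_ *: _ + _ *: _)); by field.
Qed.

Lemma zl2 (V : zmodType) (x y a b c : V) :
  (x - y) - (a - b - (y + c)) = (x - a) + (b + c).
Proof.
rewrite !opprD !opprK !addrA.
by rewrite [_ + b + y]addrAC [_ - a + y]addrAC subrK.
Qed.

Lemma key2 (F : fieldType) (V : lmodType F) (q r : F) (hq0 : q != 0) (u v a b E : V)
 (hP : q*:b - q^-1*:v = r*:E) (hQ : q*:u - q^-1*:a = r*:E) :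
 q^-2 *: (u - v) - (a - b) = (q^-2 - q^+2) *: u + ((q + q^-1) * r) *: E.
Proof.
have ha : a = (q*q)*:u - (q*r)*:E.
  have := congr1 (fun t => q *: t) hQ; rewrite /= scalerBr !scalerA mulfV // scale1r => h.
  by rewrite -h subKr.
have hb : b = (q^-1*q^-1)*:v + (q^-1*r)*:E.
  have := congr1 (fun t => q^-1 *: t) hP; rewrite /= scalerBr !scalerA mulVf // scale1r => h.
  by rewrite -h addrC subrK.
have e : q^-1*q^-1 = q^-2 by rewrite -invrM ?unitfE // -expr2.
rewrite ha hb e scalerBr zl2 scalerBl mulrDl scalerDl.
congr (_ *: _ - _ *: _ + (_ *: _ + _ *: _)); by field.
Qed.

Lemma pull1 (F : fieldType) (A : algType F) (k c : F) (x D : A) :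
  x * (c *: D) - k *: ((c *: D) * x) = c *: (x*D - k *: (D*x)).
Proof. by rewrite -scalerAr -scalerAl scalerA mulrC -scalerA -scalerBr. Qed.

Lemma pull2 (F : fieldType) (A : algType F) (k c : F) (x D : A) :
  k *: (x * (c *: D)) - (c *: D) * x = c *: (k *: (x*D) - D*x).
Proof. by rewrite -scalerAr -scalerAl scalerA mulrC -scalerA -scalerBr. Qed.

Lemma fin1 (F : fieldType) (V : lmodType F) (x y u : V) (al be k1 k2 : F) :
  be * k1 = al -> be * k2 = -1 -> x = y - al*:u + be *: (k1*:u - k2*:(x - y)).
Proof. rewrite scalerBr !scalerA. move=> -> ->; by rewrite scaleN1r opprK addrA subrK addrC subrK. Qed.

Lemma fin2 (F : fieldType) (V : lmodType F) (x y u : V) (al be k1 k2 : F) :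
  be * k1 = - al -> be * k2 = -1 -> x = y - al*:u - be *: (k1*:u + k2*:(x - y)).
Proof. rewrite scalerDr !scalerA. move=> -> ->; by rewrite scaleNr scaleN1r opprD !opprK addrA subrK addrC subrK. Qed.

Theorem lemma11p5 (F : fieldType) (q : F)
    (hq0 : q != 0) (hq : forall n : nat, (0 < n)%N -> q ^+ n != 1)
    (A : algType F) (Wm Wp G Gt : nat -> A)
    (hrel : Oq_rels q Wm Wp G Gt) (m : nat) :
  Wm m.+1 = Wp m
            - ((q - q^-1) / (q ^+ 2 - q ^- 2) ^+ 2) *: (Wm 0%N * Gt m)
            + (q ^+ 2 / (q ^+ 2 - q ^- 2) ^+ 2) *: comm (Bdelta q Wm Wp) (Wm m)
  /\
  Wp m.+1 = Wm m
            - ((q - q^-1) / (q ^+ 2 - q ^- 2) ^+ 2) *: (Wp 0%N * Gt m)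
            - ((q ^+ 2 - q ^- 2) ^+ 2)^-1 *: comm (Bdelta q Wm Wp) (Wp m).
Proof.
have h4 := hq 4%N isT.
have hs2 : q^+2 - q^-2 != 0.
  apply: contra h4 => /eqP h; apply/eqP.
  have : q^+4 - 1 = q^+2 * (q^+2 - q^-2) by field.
  by rewrite h mulr0 => /eqP; rewrite subr_eq0 => /eqP.
have hc : q + q^-1 != 0.
  apply: contra h4 => /eqP h; apply/eqP.
  have : q^+4 - 1 = (q + q^-1) * (q - q^-1) * q^+2 by field.
  by rewrite h !mul0r => /eqP; rewrite subr_eq0 => /eqP.
have hs : (q^+2 - q^-2)^+2 != 0 by rewrite expf_neq0.
have hA : (q*q)^+2 - 1 != 0 by rewrite -expr2 -exprM subr_eq0.
have hB : q*q + 1 != 0.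
  apply: contra hA => /eqP h; apply/eqP.
  have -> : (q*q)^+2 - 1 = (q*q + 1) * (q*q - 1) by ring.
  by rewrite h mul0r.
case: hrel => h1 h2 h3 h4' h5.
split.
- have [_ hK] := h1 m.
  have [hG hGt] := h2 m.
  have [c0 _ _ _ _] := h4' 0%N m.
  have hWX : Wm 0%N * Wm m = Wm m * Wm 0%N.
    by apply/eqP; rewrite -subr_eq0; apply/eqP.
  rewrite /Bdelta (@commB_X _ _ (q^-2) (Wp 0%N) _ _ hWX) hK.
  rewrite pull1 [Wm 0%N * (_ - _)]mulrBr [(_ - _) * Wm 0%N]mulrBl.
  rewrite /qcomm -scalerBr in hG hGt.
  rewrite (@key1 _ _ _ _ hq0 _ _ _ _ _ hG hGt) scalerA.
  apply: fin1; rewrite /rho; field; by rewrite hq0 hA hB.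
- have [hK _] := h1 m.
  have [hG hGt] := h3 m.
  have [_ c0 _ _ _] := h4' 0%N m.
  have hWY : Wp 0%N * Wp m = Wp m * Wp 0%N.
    by apply/eqP; rewrite -subr_eq0; apply/eqP.
  rewrite /Bdelta (@commB_Y _ _ (q^-2) _ (Wm 0%N) _ hWY) hK.
  rewrite pull2 [Wp 0%N * (_ - _)]mulrBr [(_ - _) * Wp 0%N]mulrBl.
  rewrite /qcomm -scalerBr in hG hGt.
  rewrite (@key2 _ _ _ _ hq0 _ _ _ _ _ hG hGt) scalerA.
  apply: fin2; rewrite /rho; field; by rewrite hq0 hA hB.
Qed.
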